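(* Let $F$ be a $4$-regular graph and let $P$ be a circuit partition of $F$. For each cycle $C$ of $F$, there is a cycle $C'$ of $F$ that traverses the same set of edges as $C$ such that $\pi_P(C')$ is a cycle of $\mathrm{Tch}(P)$.
   Context: Graphs: $G=(V,H,E,\epsilon)$ with finite sets of vertices $V$ and half-edges $H$, a partition $E$ of $H$ into unordered pairs (edges), and $\epsilon:H\to V$; loops and multiple edges allowed. A single transition is an unordered pair of distinct half-edges incident with a common vertex; a directed single transition is such an ordered pair. A closed walk is a sequence $((h_1,h_2),\dots,(h_{n-1},h_n))$ of directed single transitions with $\{h_2,h_3\},\{h_4,h_5\},\dots,\{h_n,h_1\}$ edges, up to cyclic shift; it traverses an edge if the edge's half-edges occur in it. An oriented circuit is a nonempty closed walk in which each half-edge occurs at most once; an oriented cycle is a set of oriented circuits such that each edge is traversed by at most one of them. Circuits and cycles are the same notions with orientation forgotten (each directed single transition replaced by the corresponding single transition). $F$ is $4$-regular if every vertex is incident with exactly $4$ half-edges. A transition at $v$ is a partition of the four half-edges at $v$ into two single transitions. A circuit partition $P$ is a set of circuits of $F$ such that every half-edge lies in exactly one single transition of exactly one circuit of $P$; $\tau(P)$ is the set of transitions both of whose single transitions occur in circuits of $P$. The touch-graph $\mathrm{Tch}(P)$ has vertex set $P$, half-edge set the set of single transitions occurring in circuits of $P$, edge set $\tau(P)$, and maps each single transition to the circuit containing it. For a closed walk $W$ of $F$, $\pi_P(W)$ is obtained by replacing each directed single transition $(h,h')$ of $W$ by $(s,s')$, where $s,s'$ are the single transitions of circuits of $P$ containing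 $h,h'$, and deleting pairs with $s=s'$; it is a closed walk of $\mathrm{Tch}(P)$ in which each remaining $(s,s')$ traverses edge $\{s,s'\}$ from half-edge $s$ to half-edge $s'$. This is applied to unoriented circuits by forgetting orientations, and to cycles elementwise. *)

(* Defs.v *)
From mathcomp Require Import all_boot.
Set Implicit Arguments. Unset Strict Implicit. Unset Printing Implicit Defensive.

(* A graph (V, H, E, eps): finite vertices and half-edges; the partition E of
   H into unordered pairs is given by the fixed-point-free involution [gpart]
   (h and gpart h form an edge); [gend] is eps. Loops/multi-edges allowed. *)
Record graph := Graph {
  gV : finType;
  gH : finType;
  gpart : gH -> gH;
  gend : gH -> gV }.

Definition wf_graph (G : graph) : Prop :=
  forall h : gH G, gpart (gpart h) = h /\ gpart h <> h.

Definition four_regular (G : graph) : Prop :=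
  forall v : gV G, #|[set h : gH G | gend h == v]| = 4.

Section Walks.
Variable G : graph.
Local Notation H := (gH G).

(* A closed walk is a seq of directed single transitions (h1,h2),(h3,h4),...
   with {h2,h3},...,{hn,h1} edges; considered up to cyclic shift (all
   predicates below are invariant under rotation). *)
Definition dir_single_transition (p : H * H) : bool :=
  (p.1 != p.2) && (gend p.1 == gend p.2).

Definition closed_walk (W : seq (H * H)) : bool :=
  all dir_single_transition W &&
  all (fun pq : (H * H) * (H * H) => gpart pq.1.2 == pq.2.1) (zip W (rot 1 W)).

Definition walk_halves (W : seq (H * H)) : seq H :=
  flatten [seq [:: p.1; p.2] | p <- W].

Definition walk_edges (W : seq (H * H)) : {set {set H}} :=
  [set [set h; gpart h] | h in walk_halves W].

Definition oriented_circuit (W : seq (H * H)) : bool :=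
  [&& closed_walk W, W != [::] & uniq (walk_halves W)].

Definition oriented_cycle (C : seq (seq (H * H))) : bool :=
  all oriented_circuit C &&
  pairwise (fun W1 W2 => [disjoint walk_edges W1 & walk_edges W2]) C.

Definition cycle_edges (C : seq (seq (H * H))) : {set {set H}} :=
  \bigcup_(W <- C) walk_edges W.

End Walks.

Section TouchGraph.
Variable F : graph.
Local Notation H := (gH F).
Variable P : seq (seq (H * H)).

Definition circuit_partition : Prop :=
  all (oriented_circuit (G := F)) P /\
  forall h : H,
    \sum_(W <- P) count (fun p : H * H => (p.1 == h) || (p.2 == h)) W = 1%N.

Definition sset (p : H * H) : {set H} := [set p.1; p.2].

Definition STP : seq {set H} := [seq sset p | p <- flatten P].

(* half-edges of Tch(P) *)
Definition TH : finType := {s : {set H} | s \in STP}.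

Definition cidx (s : {set H}) : nat :=
  find (fun W => s \in [seq sset p | p <- W]) P.

Lemma cidx_lt (s : {set H}) : s \in STP -> cidx s < size P.
Proof.
rewrite /STP => /mapP [p /flattenP [W WP pW] ->].
rewrite /cidx -has_find; apply/hasP; exists W => //.
by apply/mapP; exists p.
Qed.

(* eps of Tch(P): the circuit of P (indexed by its position) containing s *)
Definition tch_end (s : TH) : 'I_(size P) := Ordinal (cidx_lt (valP s)).

Definition is_transition (s t : {set H}) : bool :=
  [disjoint s & t] && [exists v, s :|: t == [set h | gend h == v]].

(* the edge partner of s in Tch(P): edges of Tch(P) are tau(P) *)
Definition tch_part (s : TH) : TH :=
  odflt s [pick t : TH | is_transition (val s) (val t)].

Definition Tch : graph := Graph tch_part tch_end.

Definition st_of (h : H) : option TH := [pick s : TH | h \in val s].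

(* remaining pairs (s, s') of pi_P(W), each traversing edge {s,s'} of Tch *)
Definition pi_pairs (W : seq (H * H)) : seq (TH * TH) :=
  pmap (fun p : H * H =>
          match st_of p.1, st_of p.2 with
          | Some s, Some s' => if s != s' then Some (s, s') else None
          | _, _ => None
          end) W.

(* pi_P(W) as a closed walk of Tch(P), in the directed-single-transition
   format: [(s1',s2); (s2',s3); ...; (sk',s1)] *)
Definition piP (W : seq (H * H)) : seq (TH * TH) :=
  [seq (ab.1.2, ab.2.1) | ab <- zip (pi_pairs W) (rot 1 (pi_pairs W))].

(* pi_P applied elementwise to a cycle; empty images are discarded *)
Definition piP_cycle (C : seq (seq (H * H))) : seq (seq (TH * TH)) :=
  [seq piP W | W <- C & piP W != [::]].

End TouchGraph.

(* Main.v *)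
Require Import Defs.
From mathcomp Require Import all_boot.
Set Implicit Arguments. Unset Strict Implicit. Unset Printing Implicit Defensive.

Lemma ZC (A : Type) (pr : pred (A * A)) (e : rel A) (s : seq A) :
  (forall a b, pr (a, b) = e a b) ->
  all pr (zip s (rot 1 s)) = cycle e s.
Proof.
move=> prE; case: s => [|x p] //; rewrite rot1_cons /=.
suff: forall u, all pr (zip (x :: p) (rcons p u)) = path e x (rcons p u) by apply.
elim: p x => [|y p IH] x u /=; first by rewrite prE.
by rewrite prE -IH.
Qed.

Lemma cwE_gen (G : graph) (W : seq (gH G * gH G)) :
  closed_walk W = all (@dir_single_transition G) W &&
                  cycle (fun a b => gpart a.2 == b.1) W.
Proof. by rewrite /closed_walk (@ZC _ _ (fun a b => gpart a.2 == b.1)). Qed.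

Section Qs.
Variable A : Type.
Definition Fp (ab : (A * A) * (A * A)) := (ab.1.2, ab.2.1).
Fixpoint qs (a : A) (T : seq (A * A)) (u : A * A) : seq (A * A) :=
  if T is x :: T' then (a, x.1) :: qs x.2 T' u else [:: (a, u.1)].
Lemma qsE t T u : map Fp (zip (t :: T) (rcons T u)) = qs t.2 T u.
Proof. by elim: T t => [|x T IH] t //=; rewrite IH. Qed.
Definition hv (W : seq (A * A)) := flatten [seq [:: p.1; p.2] | p <- W].
Lemma hv_qs a T u : hv (qs a T u) = a :: rcons (hv T) u.1.
Proof. by elim: T a => [|x T IH] a //=; rewrite /hv /= -/(hv _) IH. Qed.
Lemma G3 T : hv (map Fp (zip T (rot 1 T))) = rot 1 (hv T).
Proof. by case: T => [|t T] //; rewrite rot1_cons qsE hv_qs /hv /= rot1_cons. Qed.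
Variable rho : rel A.
Lemma qs_path q T a u : rho q.2 a -> all (fun b => rho b.1 b.2) T ->
  path (fun q q' => rho q.2 q'.1) q (qs a T u).
Proof.
elim: T q a => [|x T IH] q a /=; first by move=> ->.
by move=> -> /andP[hx hT] /=; apply: IH.
Qed.
Lemma qs_last q0 a T u : (last q0 (qs a T u)).2 = u.1.
Proof. by elim: T q0 a => [|x T IH] q0 a //=. Qed.
Lemma G2 T : all (fun b => rho b.1 b.2) T ->
  cycle (fun q q' => rho q.2 q'.1) (map Fp (zip T (rot 1 T))).
Proof.
case: T => [|t T] //= /andP[ht hT]; rewrite rot1_cons qsE.
rewrite (cycle_path (t.2, t.2)); apply: qs_path => //.
by rewrite qs_last.
Qed.
Lemma G1 (R : pred (A * A)) T :
  all R (map Fp (zip T (rot 1 T))) = cycle (fun a b => R (a.2, b.1)) T.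
Proof. by rewrite all_map; apply: ZC. Qed.
Lemma piP_size T : size (map Fp (zip T (rot 1 T))) = size T.
Proof. by rewrite size_map size_zip size_rot minnn. Qed.
End Qs.

Section Seg.
Variables (A : Type) (B : eqType) (p : pred A) (inn out : A -> B).
Lemma seg x q : path (fun a b => out a == inn b) x q ->
  all (fun a => p a || (inn a == out a)) q -> p (last x q) ->
  path (fun a b => out a == inn b) x (filter p q).
Proof.
elim: q x => [|a q IH] x //= /andP[e1 pq] /andP[pa aq] pl.
case: ifP => pa' /=; first by rewrite e1 IH.
have := IH a pq aq pl; rewrite pa' /= in pa.
case: (filter p q) => [|b l] //= /andP[eab ->].
by rewrite andbT (eqP e1) (eqP pa).
Qed.
Lemma segc a q : p a -> cycle (fun a b => out a == inn b) (a :: q) ->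
  all (fun a => p a || (inn a == out a)) (a :: q) ->
  cycle (fun a b => out a == inn b) (filter p (a :: q)).
Proof.
move=> pa /= cyc /andP[_ aq]; rewrite pa /=.
have -> : rcons (filter p q) a = filter p (rcons q a) by rewrite filter_rcons pa.
by apply: seg => //; rewrite ?all_rcons ?last_rcons ?pa ?aq.
Qed.
End Seg.

Lemma cycle_true (A : Type) (s : seq A) : cycle (fun _ _ => true) s.
Proof.
suff H : forall x (s : seq A), path (fun _ _ => true) x s.
  by case: s => //= x p; apply: H.
by move=> x t; elim: t x => //=.
Qed.

Lemma mem_rem_neq (A : eqType) (x y : A) s : y != x -> y \in s -> y \in rem x s.
Proof.
move=> yx; elim: s => //= z s IH; rewrite inE.
case: ifP => [/eqP zx | _]; first by rewrite zx (negbTE yx).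
by rewrite inE; case/orP => [->|/IH->]; rewrite ?orbT.
Qed.

Lemma count1_un (A : eqType) (a : pred A) s x y :
  count a s = 1 -> x \in s -> y \in s -> a x -> a y -> x = y.
Proof.
move=> c1 xs ys ax ay; apply/eqP/negPn/negP => nxy.
have := (permP (perm_to_rem xs)) a; rewrite c1 /= ax => /eqP.
rewrite eqSS eq_sym -leqn0 leqNgt -has_count => /negP; apply.
apply/hasP; exists y => //; apply: mem_rem_neq => //; by rewrite eq_sym.
Qed.

Lemma uniq_pairs (A B : eqType) (a b : A -> B) L : uniq L ->
  {in L, forall y, a y != b y} ->
  {in L &, forall y z, [|| a y == a z, a y == b z, b y == a z | b y == b z] -> y = z} ->
  uniq (flatten [seq [:: a y; b y] | y <- L]).
Proof.
elim: L => //= y L IH /andP[yL uL] ne hyp.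
have memf x : x \in flatten [seq [:: a y; b y] | y <- L] ->
   exists2 z, z \in L & (x == a z) || (x == b z).
  by case/flattenP => s /mapP[z zL ->]; rewrite !inE => ?; exists z.
rewrite !inE negb_or ne ?mem_head //= IH //; last first.
- by move=> u v hu hv; apply: hyp; rewrite inE ?hu ?hv orbT.
- by move=> u hu; apply: ne; rewrite inE hu orbT.
rewrite andbT; apply/andP; split; apply/negP => /memf[z zL hz].
- have := hyp y z; rewrite mem_head [z \in _]inE zL orbT => /(_ isT isT).
  by case/orP: hz => ->; rewrite ?orbT // => /(_ isT) eyz; rewrite eyz zL in yL.
- have := hyp y z; rewrite mem_head [z \in _]inE zL orbT => /(_ isT isT).
  by case/orP: hz => ->; rewrite ?orbT // => /(_ isT) eyz; rewrite eyz zL in yL.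
Qed.

Lemma pairwise_uniq_in (A : eqType) (rr : rel A) L : uniq L ->
  {in L &, forall x y, x != y -> rr x y} -> pairwise rr L.
Proof.
elim: L => //= x L IH /andP[xL uL] h; rewrite IH //; last first.
  by move=> u v hu hv; apply: h; rewrite inE ?hu ?hv orbT.
rewrite andbT; apply/allP => y yL; apply: h; rewrite ?inE ?yL ?eqxx ?orbT //.
by apply/eqP => E; rewrite E yL in xL.
Qed.
Section Main.
Variable F : graph.
Local Notation H := (gH F).
Local Notation g := (@gpart F).
Local Notation ge := (@gend F).
Hypothesis wf : wf_graph F.
Hypothesis reg : four_regular F.

Lemma gK : involutive g. Proof. by move=> h; case: (wf h). Qed.
Lemma g_neq h : g h != h. Proof. by case: (wf h) => _ /eqP. Qed.

Definition inP (h : H) (p : H * H) := (h == p.1) || (h == p.2).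

Lemma hvc (p : H * H) W : walk_halves (p :: W) = p.1 :: p.2 :: walk_halves W.
Proof. by []. Qed.

Lemma hv_mem (W : seq (H * H)) h : (h \in walk_halves W) = has (inP h) W.
Proof. by elim: W => //= p W IH; rewrite hvc !inE IH orbA. Qed.

Lemma hv_cat (W1 W2 : seq (H * H)) :
  walk_halves (W1 ++ W2) = walk_halves W1 ++ walk_halves W2.
Proof. by rewrite /walk_halves map_cat flatten_cat. Qed.

Lemma hv_flatten (L : seq (seq (H * H))) h :
  (h \in walk_halves (flatten L)) = has (fun W => h \in walk_halves W) L.
Proof. by elim: L => //= W L IH; rewrite hv_cat mem_cat IH. Qed.

Lemma cwE (W : seq (H * H)) : closed_walk W = all (@dir_single_transition F) W &&
  cycle (fun a b => g a.2 == b.1) W.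
Proof. exact: cwE_gen. Qed.

Lemma cw_g W h : closed_walk W -> h \in walk_halves W -> g h \in walk_halves W.
Proof.
rewrite cwE => /andP[_ cyc]; rewrite !hv_mem => /hasP[p pW /orP[]/eqP->].
- apply/hasP; exists (prev W p); first by rewrite mem_prev.
  by have := prev_cycle cyc pW => /eqP <-; rewrite /inP gK eqxx orbT.
- apply/hasP; exists (next W p); first by rewrite mem_next.
  by have := next_cycle cyc pW => /eqP ->; rewrite /inP eqxx.
Qed.

Lemma five a b c d e : ge b = ge a -> ge c = ge a -> ge d = ge a -> ge e = ge a ->
  a != b -> a != c -> a != d -> a != e -> b != c -> b != d -> b != e ->
  c != d -> c != e -> d != e -> False.
Proof.
move=> eb ec ed ee ab ac ad ae bc bd be cd ce de.
have u : uniq [:: a; b; c; d; e].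
  by rewrite /= !inE !negb_or ab ac ad ae bc bd be cd ce de.
have : #|[:: a; b; c; d; e]| <= #|[set h | ge h == ge a]|.
  apply: subset_leq_card; apply/subsetP => x; rewrite !inE.
  by case/orP => [|/orP[|/orP[|/orP[]]]] /eqP ->; rewrite ?eb ?ec ?ed ?ee eqxx.
by rewrite (card_uniqP u) reg.
Qed.

Section Partner.
Variable D : seq (H * H).
Hypothesis Ddst : all (@dir_single_transition F) D.
Hypothesis Dun : forall h p q, p \in D -> q \in D -> inP h p -> inP h q -> p = q.
Definition pt h := odflt h [pick h' | ((h, h') \in D) || ((h', h) \in D)].
Lemma ptP h p : p \in D -> inP h p -> p = (h, pt h) \/ p = (pt h, h).
Proof.
move=> pD hp; rewrite /pt; case: pickP => [h' /= /orP[] hD | H0].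
- by left; apply: (Dun pD hD hp); rewrite /inP eqxx.
- by right; apply: (Dun pD hD hp); rewrite /inP eqxx orbT.
- exfalso; case/orP: (hp) => /eqP Eh.
  + by move: (H0 p.2); rewrite /= Eh -surjective_pairing pD.
  + by move: (H0 p.1); rewrite /= Eh -surjective_pairing pD orbT.
Qed.
Lemma pdst p : p \in D -> (p.1 != p.2) /\ (ge p.1 = ge p.2).
Proof. by move=> pD; have /andP[? /eqP ?] := allP Ddst p pD. Qed.
Lemma pt_neq h p : p \in D -> inP h p -> pt h != h.
Proof.
move=> pD hp; case: (ptP pD hp) => E; have := pdst pD; rewrite E /= => -[] //.
by rewrite eq_sym.
Qed.
Lemma pt_end h p : p \in D -> inP h p -> ge (pt h) = ge h.
Proof. by move=> pD hp; case: (ptP pD hp) => E; have := pdst pD; rewrite E /= => -[]. Qed.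
Lemma pt_in h p : p \in D -> inP h p -> inP (pt h) p.
Proof. by move=> pD hp; case: (ptP pD hp) => ->; rewrite /inP eqxx ?orbT. Qed.
Lemma ptK h p : p \in D -> inP h p -> pt (pt h) = h.
Proof.
move=> pD hp; have /eqP ne := pt_neq pD hp.
by have := ptP pD (pt_in pD hp); case: (ptP pD hp) => -> [] [] *; congruence.
Qed.
End Partner.

Variable P : seq (seq (H * H)).
Hypothesis cp : circuit_partition P.
Local Notation DP := (flatten P).

Lemma DPdst : all (@dir_single_transition F) DP.
Proof.
apply/allP => p /flattenP[W WP pW]; have := allP cp.1 W WP.
by case/and3P; rewrite cwE => /andP[/allP a _] _ _; apply: a.
Qed.
Lemma DPcount h : count (inP h) DP = 1.
Proof.
rewrite count_flatten sumnE big_map -(cp.2 h); apply: eq_bigr => W _.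
by apply: eq_count => p; rewrite /inP !(eq_sym h).
Qed.
Lemma DPun h p q : p \in DP -> q \in DP -> inP h p -> inP h q -> p = q.
Proof. exact: count1_un (DPcount h). Qed.
Lemma DPcov h : exists2 p, p \in DP & inP h p.
Proof. by apply/hasP; rewrite has_count DPcount. Qed.

Definition Pp := pt DP.
Lemma PpP h p : p \in DP -> inP h p -> p = (h, Pp h) \/ p = (Pp h, h).
Proof. move=> pD hp; exact: (ptP (@DPun) pD hp). Qed.
Lemma Pp_neq h : Pp h != h.
Proof. by case: (DPcov h) => p pD hp; apply: (pt_neq DPdst (@DPun) pD hp). Qed.
Lemma Pp_end h : ge (Pp h) = ge h.
Proof. by case: (DPcov h) => p pD hp; apply: (pt_end DPdst (@DPun) pD hp). Qed.
Lemma PpK h : Pp (Pp h) = h.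
Proof. by case: (DPcov h) => p pD hp; apply: (ptK DPdst (@DPun) pD hp). Qed.
Lemma Pp_inj : injective Pp. Proof. exact: inv_inj PpK. Qed.

Lemma sset_DP p : p \in DP -> sset p = [set p.1; Pp p.1].
Proof.
move=> pD; have hp : inP p.1 p by rewrite /inP eqxx.
case: (PpP pD hp) => E.
- by rewrite /sset [p.2](congr1 snd E).
- by move: E; case: (p) => a b /= [E1 _]; have := Pp_neq a; rewrite -E1 eqxx.
Qed.

Lemma TH_val (s : TH P) : exists2 p, p \in DP & val s = sset p.
Proof. by have := valP s; rewrite /STP => /mapP[p pD ->]; exists p. Qed.

Lemma TH_mem (s : TH P) h : h \in val s -> val s = [set h; Pp h].
Proof.
case: (TH_val s) => p pD ->; rewrite sset_DP // !inE => /orP[]/eqP-> //.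
by rewrite PpK setUC.
Qed.

Lemma set_Pp h : [set Pp h; Pp (Pp h)] = [set h; Pp h].
Proof. by rewrite PpK setUC. Qed.

Lemma st_ofE h : exists s, st_of P h = Some s /\ val s = [set h; Pp h].
Proof.
have hm : [set h; Pp h] \in STP P.
  case: (DPcov h) => p pD hp; apply/mapP; exists p => //.
  by case: (PpP pD hp) => ->; rewrite /sset //= setUC.
rewrite /st_of; case: pickP => [s hs | H0]; first by exists s; split => //; apply: TH_mem.
by have := H0 (Sub [set h; Pp h] hm); rewrite /= !inE eqxx.
Qed.

Lemma cidx_set h : cidx P [set h; Pp h] = find (fun W => h \in walk_halves W) P.
Proof.
rewrite /cidx; apply: eq_in_find => W WP /=; apply/mapP/idP.
- case=> q qW E; rewrite hv_mem; apply/hasP; exists q => //.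
  have : h \in [set h; Pp h] by rewrite !inE eqxx.
  by rewrite E /sset !inE.
- rewrite hv_mem => /hasP[q qW hq]; exists q => //.
  have qD : q \in DP by apply/flattenP; exists W.
  by case: (PpP qD hq) => ->; rewrite /sset //= setUC.
Qed.

Lemma cidx_g h : cidx P [set g h; Pp (g h)] = cidx P [set h; Pp h].
Proof.
rewrite !cidx_set; apply: eq_in_find => W WP.
have cw : closed_walk W by case/and3P: (allP cp.1 W WP).
by apply/idP/idP => /(cw_g cw); rewrite ?gK.
Qed.

Variable C : seq (seq (H * H)).
Hypothesis occ : oriented_cycle C.
Local Notation DC := (flatten C).

Lemma uniq_halves_un (W : seq (H * H)) h p q : uniq (walk_halves W) ->
  p \in W -> q \in W -> inP h p -> inP h q -> p = q.
Proof.
elim: W => // a W IH; rewrite hvc /= !inE negb_or => /andP[/andP[a12 a1W] /andP[a2W uW]].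
have aux r : r \in W -> inP h r -> inP h a -> False.
  move=> rW hr; have hW : h \in walk_halves W by rewrite hv_mem; apply/hasP; exists r.
  by case/orP => /eqP E; rewrite -E hW in a1W a2W.
case/orP => [/eqP->|pW]; case/orP => [/eqP->|qW] // hp hq.
- by case: (aux q qW hq hp).
- by case: (aux p pW hp hq).
- exact: IH.
Qed.

Lemma DCuniq : uniq (walk_halves DC).
Proof.
case/andP: occ; elim: C => //= W L IH /andP[oW oL] /andP[dW pL].
rewrite hv_cat cat_uniq IH // andbT; case/and3P: oW => _ _ -> /=.
apply/hasP => -[h hL hW]; move: hL; rewrite hv_flatten => /hasP[W' W'L hW'].
have := allP dW W' W'L; rewrite disjoint_subset => /subsetP/(_ [set h; g h]).
rewrite !inE; move/(_ (imset_f _ hW)) => /negP; apply; exact: imset_f.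
Qed.

Lemma occ1 W : W \in C -> oriented_circuit W.
Proof. by case/andP: occ => /allP h _; apply: h. Qed.

Lemma DCdst : all (@dir_single_transition F) DC.
Proof.
apply/allP => p /flattenP[W WC pW]; have := occ1 WC.
by case/and3P; rewrite cwE => /andP[/allP a _] _ _; apply: a.
Qed.

Lemma DCun h p q : p \in DC -> q \in DC -> inP h p -> inP h q -> p = q.
Proof. exact: uniq_halves_un DCuniq. Qed.

Definition U := [set h | h \in walk_halves DC].
Definition Cp := pt DC.

Lemma CpP h : h \in U -> exists2 p, p \in DC & inP h p.
Proof. by rewrite inE hv_mem => /hasP. Qed.
Lemma Cp_neq h : h \in U -> Cp h != h.
Proof. by case/CpP => p pD hp; apply: (pt_neq DCdst (@DCun) pD hp). Qed.
Lemma Cp_end h : h \in U -> ge (Cp h) = ge h.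
Proof. by case/CpP => p pD hp; apply: (pt_end DCdst (@DCun) pD hp). Qed.
Lemma CpK h : h \in U -> Cp (Cp h) = h.
Proof. by case/CpP => p pD hp; apply: (ptK DCdst (@DCun) pD hp). Qed.
Lemma CpU h : h \in U -> Cp h \in U.
Proof.
case/CpP => p pD hp; rewrite inE hv_mem; apply/hasP; exists p => //.
exact: (pt_in (@DCun) pD hp).
Qed.
Lemma gU h : (g h \in U) = (h \in U).
Proof.
have aux x : x \in U -> g x \in U.
  rewrite !inE !hv_flatten => /hasP[W WC hW]; apply/hasP; exists W => //.
  by apply: cw_g => //; case/and3P: (occ1 WC).
by apply/idP/idP => /aux //; rewrite gK.
Qed.

Lemma neqU x y : x \in U -> y \notin U -> x != y.
Proof. by move=> xU; apply: contra => /eqP <-. Qed.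

Definition sg h := if h \in U then (if Pp h \in U then Pp h else Cp h) else h.

Lemma sgU h : (sg h \in U) = (h \in U).
Proof.
rewrite /sg; case: ifP => hU //; case: ifP => // _; exact: CpU.
Qed.
Lemma sg_neq h : h \in U -> sg h != h.
Proof. by move=> hU; rewrite /sg hU; case: ifP => _; rewrite ?Pp_neq ?Cp_neq. Qed.
Lemma sg_end h : ge (sg h) = ge h.
Proof. rewrite /sg; case: ifP => hU //; case: ifP => _; rewrite ?Pp_end ?Cp_end //. Qed.

Lemma sgK : involutive sg.
Proof.
move=> h; case hU: (h \in U); last by rewrite /sg hU hU.
rewrite {2}/sg hU; case: ifP => PU.
  by rewrite /sg PU PpK hU.
have cU := CpU hU; rewrite /sg cU; case: ifP => qU; last exact: CpK.
exfalso; set c := Cp h in cU qU *; set q := Pp c in qU *.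
have Cqe : ge (Cp q) = ge h by rewrite Cp_end // /q Pp_end Cp_end.
have hq : h != q.
  by apply/eqP => E; move: PU; rewrite E /q PpK cU.
have hCq : h != Cp q.
  apply/eqP => E; have : Cp h = q by rewrite E CpK.
  by move/eqP; rewrite -/c eq_sym /q (negbTE (Pp_neq c)).
have cCq : c != Cp q.
  apply/eqP => E; have : Cp c = q by rewrite E CpK.
  by rewrite /c CpK // => /eqP; rewrite (negbTE hq).
apply: (five (a := h) (b := c) (c := q) (d := Cp q) (e := Pp h)).
- by rewrite /c Cp_end.
- by rewrite /q Pp_end /c Cp_end.
- exact: Cqe.
- by rewrite Pp_end.
- by rewrite eq_sym Cp_neq.
- exact: hq.
- exact: hCq.
- by rewrite eq_sym Pp_neq.
- by rewrite eq_sym /q Pp_neq.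
- exact: cCq.
- by apply: neqU; rewrite ?PU.
- by rewrite eq_sym Cp_neq.
- by apply: neqU; rewrite ?PU.
- by apply: neqU; rewrite ?PU ?CpU.
Qed.

Lemma sg_inj : injective sg. Proof. exact: inv_inj sgK. Qed.

Definition cr y := sg y != Pp y.

Lemma cr_facts y : y \in U -> cr y -> Pp y \notin U /\ sg y = Cp y.
Proof. by rewrite /cr /sg => ->; case: ifP => PU; rewrite ?eqxx. Qed.

Lemma cr_sg y : y \in U -> cr y -> cr (sg y).
Proof.
move=> yU; rewrite /cr sgK; apply: contra => /eqP E.
by rewrite -[sg y]PpK -E.
Qed.

Lemma cr_uniq y z : y \in U -> cr y -> z \in U -> ge z = ge y -> z = y \/ z = sg y.
Proof.
move=> yU cy zU ez; case: (cr_facts yU cy) => PU ->.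
case: (eqVneq z y) => [->|zy]; first by left.
case: (eqVneq z (Cp y)) => [->|zc]; first by right.
exfalso; apply: (five (a := y) (b := Cp y) (c := z) (d := Cp z) (e := Pp y)).
- by rewrite Cp_end.
- exact: ez.
- by rewrite Cp_end.
- by rewrite Pp_end.
- by rewrite eq_sym Cp_neq.
- by rewrite eq_sym zy.
- apply/eqP => E; have : Cp y = z by rewrite E CpK.
  by move/eqP; rewrite eq_sym (negbTE zc).
- by rewrite eq_sym Pp_neq.
- by rewrite eq_sym zc.
- apply/eqP => /(congr1 Cp); rewrite !CpK // => E.
  by move: zy; rewrite E eqxx.
- by apply: neqU; rewrite ?CpU.
- by rewrite eq_sym Cp_neq.
- by apply: neqU.
- by apply: neqU; rewrite ?CpU.
Qed.

Definition fs h := g (sg h).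
Lemma fsK : cancel fs (fun h => sg (g h)).
Proof. by move=> h; rewrite /fs gK sgK. Qed.
Lemma finj : injective fs. Proof. exact: can_inj fsK. Qed.
Lemma fsU h : (fs h \in U) = (h \in U). Proof. by rewrite /fs gU sgU. Qed.
Lemma iterU k x : (iter k fs x \in U) = (x \in U).
Proof. by elim: k => //= k IH; rewrite fsU. Qed.

Lemma dih y k : y \in U -> sg y != iter k fs y.
Proof.
suff H : forall n y, y \in U -> (sg y != iter n fs y) && (sg y != iter n.+1 fs y).
  by move=> yU; case/andP: (H k y yU).
clear y k; elim=> [|n IH] y yU.
  by rewrite /= sg_neq //= /fs eq_sym g_neq.
case/andP: (IH y yU) => _ h1; rewrite h1 andTb; apply/eqP => E.
have yU' : fs y \in U by rewrite fsU.
case/andP: (IH (fs y) yU') => /eqP []; move: E.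
rewrite [iter n.+2 _ _]iterS iterSr => E.
by rewrite {1}/fs E /fs gK sgK.
Qed.

Definition r := [rel a b | (b == sg a) || (b == g a)].
Lemma rsym : symmetric r.
Proof.
move=> a b /=; rewrite [b == sg a]eq_sym (inv_eq sgK) [b == g a]eq_sym (inv_eq gK).
by [].
Qed.
Lemma rcs : connect_sym r. Proof. exact: sym_connect_sym rsym. Qed.
Lemma fsym : connect_sym (frel fs). Proof. exact: fconnect_sym finj. Qed.

Lemma conU x y : connect r x y -> (x \in U) = (y \in U).
Proof.
move/connectP => [p pth ->] {y}; elim: p x pth => //= y p IH x /andP[/orP[]/eqP-> pth];
by rewrite -IH // ?sgU ?gU.
Qed.

Definition start x := if [pick y | (y \in orbit fs x) && cr y] is Some y then y else x.
Lemma fcon_start x : fconnect fs x (start x).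
Proof.
rewrite /start; case: pickP => [y /andP[yO _] | _]; last exact: connect0.
by rewrite fconnect_orbit.
Qed.
Definition O x := orbit fs (start x).
Lemma O_fcon x y : (y \in O x) = fconnect fs x y.
Proof. by rewrite /O -fconnect_orbit (same_connect fsym (fcon_start x) y). Qed.
Lemma O_fconP x y : fconnect fs x y -> y \in O x.
Proof. by rewrite O_fcon. Qed.
Lemma start_cr x y : y \in O x -> cr y -> cr (start x).
Proof.
rewrite O_fcon => xy cy; rewrite /start; case: pickP => [z /andP[_ ->] // | H0].
by have := H0 y; rewrite /= -fconnect_orbit xy cy.
Qed.
Lemma O_cons x : exists q, O x = start x :: q.
Proof. by rewrite /O /orbit -orderSpred /=; eexists. Qed.
Lemma O_U x y : x \in U -> y \in O x -> y \in U.
Proof. by rewrite O_fcon => xU /iter_findex <-; rewrite iterU. Qed.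
Lemma fcon_r x y : fconnect fs x y -> connect r x y.
Proof.
move/iter_findex <-; elim: (findex fs x y) => [|k IH]; first exact: connect0.
rewrite iterS; apply: connect_trans IH _.
apply: (connect_trans (y := sg (iter k fs x))); apply: connect1.
  by rewrite /= eqxx.
by rewrite /= /fs eqxx orbT.
Qed.
Lemma sgO x y : x \in U -> y \in O x -> sg y \notin O x.
Proof.
move=> xU yO; apply/negP => sO; have yU := O_U xU yO.
move: yO sO; rewrite !O_fcon => xy xs.
have ys : fconnect fs y (sg y) by apply: connect_trans _ xs; rewrite fsym.
by have := dih (findex fs y (sg y)) yU; rewrite (iter_findex ys) eqxx.
Qed.

Definition R := [seq x <- enum H | (x \in U) && (root r x == x)].
Lemma memR x : (x \in R) = (x \in U) && (root r x == x).
Proof. by rewrite mem_filter mem_enum andbT. Qed.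
Lemma R_uniq : uniq R. Proof. exact: filter_uniq (enum_uniq _). Qed.
Lemma R_U x : x \in R -> x \in U. Proof. by rewrite memR => /andP[]. Qed.
Lemma R_eq x x' y : x \in R -> x' \in R -> connect r x y -> connect r x' y -> x = x'.
Proof.
rewrite !memR => /andP[_ /eqP rx] /andP[_ /eqP rx'] /(rootP rcs) e1 /(rootP rcs) e2.
by rewrite -rx -rx' e1 e2.
Qed.

Definition S x := [pred h | (h \in O x) || (sg h \in O x)].
Lemma S_r x h : h \in S x -> connect r x h.
Proof.
case/orP; rewrite O_fcon => /fcon_r // xs.
by apply: connect_trans xs _; apply: connect1; rewrite /= sgK eqxx.
Qed.
Lemma S_closed x : closed r (S x).
Proof.
apply: (intro_closed rcs) => a b /orP[]/eqP-> /orP[]; rewrite /S !inE ?sgK.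
- by move=> ->; rewrite orbT.
- by move=> ->.
- move=> xa; rewrite O_fcon in xa; apply/orP; right; apply: O_fconP.
  apply: connect_trans xa _.
  by rewrite fsym; apply: connect1; rewrite /= /fs sgK gK.
- move=> xa; rewrite O_fcon in xa; apply/orP; left; apply: O_fconP.
  apply: connect_trans xa _.
  by apply: connect1; rewrite /= /fs sgK.
Qed.
Lemma x_S x : x \in S x.
Proof. by apply/orP; left; apply: O_fconP; apply: connect0. Qed.
Lemma U_S h : h \in U -> exists2 x, x \in R & h \in S x.
Proof.
move=> hU; exists (root r h).
  by rewrite memR (root_root rcs) eqxx andbT -(conU (connect_root r h)).
rewrite -(closed_connect (S_closed (root r h)) (_ : connect r (root r h) h)) ?x_S //.
by rewrite rcs connect_root.
Qed.
Lemma S_U x h : x \in U -> h \in S x -> h \in U.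
Proof. by move=> xU; case/orP => /(O_U xU); rewrite ?sgU. Qed.

Definition Wc x := map (fun y => (y, sg y)) (O x).
Lemma hvW x : walk_halves (Wc x) = flatten [seq [:: y; sg y] | y <- O x].
Proof. by rewrite /walk_halves -map_comp. Qed.
Lemma hvW_mem x h : (h \in walk_halves (Wc x)) = (h \in S x).
Proof.
rewrite hv_mem /Wc has_map; apply/hasP/orP.
- by case=> y yO /orP[]/eqP ->; [left | right; rewrite sgK].
- case => hO; first by exists h => //; rewrite /= /inP eqxx.
  by exists (sg h) => //; rewrite /= /inP /= sgK eqxx orbT.
Qed.

Lemma Wc_circ x : x \in R -> oriented_circuit (Wc x).
Proof.
move=> xR; have xU := R_U xR.
rewrite /oriented_circuit; apply/and3P; split.
- rewrite cwE all_map cycle_map; apply/andP; split; last exact: (cycle_orbit finj).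
  apply/allP => y yO /=; have yU := O_U xU yO.
  by rewrite /dir_single_transition /= eq_sym sg_neq // sg_end eqxx.
- by case: (O_cons x) => q; rewrite /Wc => ->.
- rewrite hvW; apply: (uniq_pairs (a := id) (b := sg)); first exact: orbit_uniq.
    by move=> y yO; rewrite eq_sym sg_neq // (O_U xU yO).
  move=> y z yO zO /or4P[]/eqP //.
  + by move=> E; move: (sgO xU zO); rewrite -E yO.
  + by move=> E; move: (sgO xU yO); rewrite E zO.
  + exact: sg_inj.
Qed.

Lemma Wc_disj x x' : x \in R -> x' \in R -> x != x' ->
  [disjoint walk_edges (Wc x) & walk_edges (Wc x')].
Proof.
move=> xR x'R nx; rewrite disjoint_subset; apply/subsetP => E /imsetP[a ha ->].
rewrite inE; apply/negP => /imsetP[b hb E2].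
rewrite hvW_mem in ha; rewrite hvW_mem in hb.
have : b \in [set a; g a] by rewrite E2 !inE eqxx.
rewrite !inE => /orP[]/eqP Eb.
- by move: nx; rewrite (R_eq xR x'R (y := b)) ?eqxx // ?S_r // Eb.
- have rag : r a (g a) by rewrite /= eqxx orbT.
  have gS : g a \in S x by rewrite -(S_closed x rag).
  by move: nx; rewrite (R_eq xR x'R (y := b)) ?eqxx // ?S_r // Eb.
Qed.

Lemma hvC' h : (h \in walk_halves (flatten (map Wc R))) = (h \in U).
Proof.
rewrite hv_flatten has_map; apply/hasP/idP => [[x xR] /=|hU].
  by rewrite hvW_mem => hS; apply: S_U hS; apply: R_U.
by case: (U_S hU) => x xR hS; exists x => //=; rewrite hvW_mem.
Qed.

Lemma mem_ce (L : seq (seq (H * H))) E :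
  reflect (exists2 h, h \in walk_halves (flatten L) & E = [set h; g h]) (E \in cycle_edges L).
Proof.
elim: L => [|W L IH]; first by rewrite /cycle_edges big_nil inE; right; case.
rewrite /cycle_edges big_cons in_setU -/(cycle_edges L).
apply: (iffP orP) => [[]|[h]].
- case/imsetP => h hW ->; by exists h => //; rewrite /= hv_cat mem_cat hW.
- move=> hE; have [h hL ->] := elimT IH hE; by exists h => //; rewrite /= hv_cat mem_cat hL orbT.
- rewrite /= hv_cat mem_cat => /orP[hW | hL] EE; first by left; rewrite EE; apply: imset_f.
  by right; apply/IH; exists h.
Qed.

Lemma CE : cycle_edges (map Wc R) = cycle_edges C.
Proof.
apply/setP => E; apply/mem_ce/mem_ce => -[h hh ->]; exists h => //.
  by rewrite hvC' inE in hh.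
by rewrite hvC' inE.
Qed.

Lemma OC' : oriented_cycle (map Wc R).
Proof.
rewrite /oriented_cycle all_map pairwise_map; apply/andP; split.
  by apply/allP => x xR; apply: Wc_circ.
by apply: pairwise_uniq_in R_uniq _ => x x' xR x'R; apply: Wc_disj.
Qed.

Section TchS.
Variable d : TH P.
Definition stt h := odflt d (st_of P h).
Lemma st_of_stt h : st_of P h = Some (stt h).
Proof. by case: (st_ofE h) => s [E _]; rewrite /stt E. Qed.
Lemma stt_val h : val (stt h) = [set h; Pp h].
Proof. by case: (st_ofE h) => s [E V]; rewrite /stt E. Qed.
Lemma stt_same h z : stt h = stt z -> z = h \/ z = Pp h.
Proof.
move=> E; have : z \in val (stt h) by rewrite E stt_val !inE eqxx.
by rewrite stt_val !inE => /orP[]/eqP; [left|right].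
Qed.
Lemma stt_end h z : stt h = stt z -> ge z = ge h.
Proof. by case/stt_same => ->; rewrite ?Pp_end. Qed.
Lemma stt_Pp h : stt (Pp h) = stt h.
Proof. by apply: val_inj; rewrite !stt_val set_Pp. Qed.
Lemma stt_cr y : y \in U -> (stt y != stt (sg y)) = cr y.
Proof.
move=> yU; apply/idP/idP.
  by apply: contra => /eqP ->; rewrite stt_Pp.
move=> cy; apply/negP => /eqP/stt_same [] E.
  by move: (sg_neq yU); rewrite E eqxx.
by move: cy; rewrite /cr E eqxx.
Qed.
Definition ct h := tch_end (stt h).
Lemma ct_g h : ct (g h) = ct h.
Proof. by apply: val_inj; rewrite /ct /= !stt_val cidx_g. Qed.

Lemma tch_part_cr y : y \in U -> cr y -> tch_part (stt y) = stt (sg y).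
Proof.
move=> yU cy; case: (cr_facts yU cy) => PU ->.
set c := Cp y; have cU : c \in U := CpU yU.
have yPy : y != Pp y by rewrite eq_sym Pp_neq.
have yc : y != c by rewrite eq_sym Cp_neq.
have yPc : y != Pp c by apply/eqP => E; move: PU; rewrite E PpK cU.
have Pyc : Pp y != c by rewrite eq_sym; apply: neqU.
have PyPc : Pp y != Pp c by apply/eqP => /Pp_inj E; rewrite E eqxx in yc.
have cPc : c != Pp c by rewrite eq_sym Pp_neq.
have ce : ge c = ge y by rewrite Cp_end.
have AT x : ge x = ge y -> [|| x == y, x == Pp y, x == c | x == Pp c].
  move=> ex; apply/negPn/negP; rewrite !negb_or => /and4P[xy xPy xc xPc].
  apply: (five (a := y) (b := Pp y) (c := c) (d := Pp c) (e := x)) => //.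
  - by rewrite Pp_end.
  - by rewrite Pp_end.
  - by rewrite eq_sym.
  - by rewrite eq_sym.
  - by rewrite eq_sym.
  - by rewrite eq_sym.
have tr : is_transition [set y; Pp y] [set c; Pp c].
  rewrite /is_transition; apply/andP; split.
    rewrite disjoint_subset; apply/subsetP => x; rewrite !inE.
    by case/orP => /eqP ->; rewrite negb_or ?yc ?yPc ?Pyc ?PyPc.
  apply/existsP; exists (ge y); apply/eqP/setP => x; rewrite !inE.
  apply/idP/idP => [/orP[]/orP[]/eqP-> | /eqP/AT]; rewrite ?Pp_end ?ce ?eqxx //.
  by rewrite -!orbA.
rewrite /tch_part; case: pickP => [t Ht | H0]; last first.
  by have := H0 (stt c); rewrite /= !stt_val tr.
rewrite /= stt_val in Ht.
case: (TH_val t) => p pD Et.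
have zt : p.1 \in val t by rewrite Et /sset !inE eqxx.
have Vt := TH_mem zt; move: zt Vt; set z := p.1 => zt Vt.
case/andP: Ht => dis /existsP[v /eqP Ev].
have ez : ge z = ge y.
  have : z \in [set y; Pp y] :|: val t by rewrite in_setU zt orbT.
  rewrite Ev inE => /eqP ->.
  have : y \in [set y; Pp y] :|: val t by rewrite !inE eqxx.
  by rewrite Ev inE => /eqP ->.
have zn : z \notin [set y; Pp y] by rewrite (disjointFl dis zt).
have := AT z ez; move: zn; rewrite !inE negb_or => /andP[/negbTE -> /negbTE ->] /=.
case/orP => /eqP Ez; apply: val_inj; rewrite /= Vt stt_val Ez //.
by rewrite set_Pp.
Qed.

Lemma part_stt y : y \in U -> cr y -> tch_part (stt (sg y)) = stt y.
Proof. by move=> yU cy; rewrite tch_part_cr ?sgU ?cr_sg // sgK. Qed.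

Lemma wh_hv (W : seq (TH P * TH P)) : @walk_halves (Tch P) W = hv W.
Proof. by []. Qed.

Definition L x := filter cr (O x).
Definition phi y := (stt y, stt (sg y)).
Definition T x := map phi (L x).

Lemma piE_gen (l : seq H) : all (fun y => y \in U) l ->
  pi_pairs P (map (fun y => (y, sg y)) l) = map phi (filter cr l).
Proof.
rewrite /pi_pairs; elim: l => //= y l IH /andP[yU lU].
rewrite !st_of_stt /= stt_cr //; case: (cr y) => /=; rewrite IH //.
Qed.

Lemma piPE x : x \in R -> Defs.piP P (Wc x) = map (@Fp _) (zip (T x) (rot 1 (T x))).
Proof.
move=> xR; rewrite /Defs.piP /Wc piE_gen //; apply/allP => y; apply: O_U; exact: R_U.
Qed.

Lemma L_U x y : x \in R -> y \in L x -> (y \in U) && cr y.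
Proof. by move=> xR; rewrite mem_filter => /andP[-> /(O_U (R_U xR)) ->]. Qed.

Lemma Lsame x x' y z : x \in R -> x' \in R -> y \in L x -> z \in L x' ->
  ge z = ge y -> x = x' /\ z = y.
Proof.
move=> xR x'R yL zL ez.
case/andP: (L_U xR yL) => yU cy; case/andP: (L_U x'R zL) => zU cz.
move: (yL) (zL); rewrite !mem_filter => /andP[_ yO] /andP[_ zO].
have zS : z \in S x.
  case: (cr_uniq yU cy zU ez) => ->; first by apply/orP; left.
  by apply/orP; right; rewrite sgK.
have xx : x = x'.
  by apply: (R_eq xR x'R (S_r zS)); apply: S_r; apply/orP; left.
split => //; case: (cr_uniq yU cy zU ez) => // E.
by move: (sgO (R_U xR) yO); rewrite -E xx zO.
Qed.

Lemma stt4 y z : [|| stt y == stt z, stt y == stt (sg z), stt (sg y) == stt z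
  | stt (sg y) == stt (sg z)] -> ge z = ge y.
Proof.
by case/or4P => /eqP/stt_end; rewrite ?sg_end.
Qed.

Lemma hvT_mem x a : x \in R -> a \in @walk_halves (Tch P) (Defs.piP P (Wc x)) ->
  exists2 y, y \in L x & (a = stt y \/ a = stt (sg y)).
Proof.
move=> xR; rewrite piPE // wh_hv G3 mem_rot /hv /T -map_comp.
case/flattenP => s /mapP[y yL ->]; rewrite !inE => /orP[]/eqP ->; exists y => //; by [left|right].
Qed.

Lemma Tcirc x : x \in R -> Defs.piP P (Wc x) != [::] ->
  @oriented_circuit (Tch P) (Defs.piP P (Wc x)).
Proof.
move=> xR ne; have xU := R_U xR.
have neT : L x != [::].
  by move: ne; rewrite piPE //; apply: contraNneq => E; rewrite /T E.
rewrite /oriented_circuit ne andTb piPE //; apply/andP; split; last first.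
  rewrite wh_hv G3 rot_uniq /hv /T -map_comp.
  apply: (uniq_pairs (a := stt) (b := fun y => stt (sg y))).
  - exact: filter_uniq (orbit_uniq _ _).
  - by move=> y /(L_U xR)/andP[yU cy]; rewrite stt_cr.
  - move=> y z yL zL /stt4 ez; by case: (Lsame xR xR yL zL ez).
rewrite cwE_gen; apply/andP; split; last first.
  apply: (G2 (rho := fun a b => tch_part a == b)); rewrite all_map.
  by apply/allP => y /(L_U xR)/andP[yU cy] /=; rewrite tch_part_cr.
rewrite G1 /T cycle_map.
rewrite (eq_cycle (e' := [rel a b | (stt (sg a) != stt b) && (ct (sg a) == ct b)])) //.
rewrite cycle_relI; apply/andP; split.
  apply: (@sub_in_cycle _ (fun y => y \in L x) (fun _ _ => true)); last exact: cycle_true.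
    move=> y z yL zL _ /=; apply/negP => /eqP E.
    have ez : ge z = ge y by rewrite (stt_end E) sg_end.
    case: (Lsame xR xR yL zL ez) => _ Ez; move: E; rewrite Ez => /eqP.
    by case/andP: (L_U xR yL) => yU cy; rewrite eq_sym; apply/negP; rewrite stt_cr.
  by apply/allP.
case: (O_cons x) => q Oq; rewrite /L Oq.
apply: (segc (inn := ct) (out := fun a => ct (sg a))).
- have [y] : exists y, y \in L x by case: (L x) neT => // y l _; exists y; rewrite mem_head.
  by rewrite mem_filter => /andP[cy yO]; apply: (start_cr yO).
- rewrite -Oq; apply: (sub_cycle _ (cycle_orbit finj (start x))).
  by move=> a b /eqP <-; rewrite /fs ct_g.
- rewrite -Oq; apply/allP => a aO; case: (boolP (cr a)) => //= nc.
  have aU := O_U xU aO; rewrite -stt_cr // negbK in nc.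
  by rewrite /ct (eqP nc).
Qed.

Lemma Tdisj x x' : x \in R -> x' \in R -> x != x' ->
  [disjoint @walk_edges (Tch P) (Defs.piP P (Wc x)) & @walk_edges (Tch P) (Defs.piP P (Wc x'))].
Proof.
move=> xR x'R nx; rewrite disjoint_subset; apply/subsetP => E /imsetP[a ha ->].
rewrite inE; apply/negP => /imsetP[b hb E2].
case: (hvT_mem xR ha) => y yL ay; case: (hvT_mem x'R hb) => z zL bz.
case/andP: (L_U xR yL) => yU cy.
have hb2 : (b == stt y) || (b == stt (sg y)).
  have : b \in [set a; tch_part a] by rewrite E2 !inE eqxx.
  by case: ay => ->; rewrite !inE ?part_stt ?tch_part_cr // => /orP[]->; rewrite ?orbT.
have ez : ge z = ge y.
  apply: stt4; case: bz => Eb; case/orP: hb2 => /eqP Eb2; rewrite Eb in Eb2; by rewrite Eb2 eqxx ?orbT.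
by case: (Lsame xR x'R yL zL ez) => xx _; rewrite xx eqxx in nx.
Qed.

Lemma Tcyc : @oriented_cycle (Tch P) (piP_cycle P (map Wc R)).
Proof.
rewrite /oriented_cycle /piP_cycle; apply/andP; split.
  apply/allP => Q /mapP[W]; rewrite mem_filter => /andP[ne /mapP[x xR EW]] ->.
  by rewrite EW in ne *; apply: Tcirc.
rewrite pairwise_map; apply: pairwise_filter; rewrite pairwise_map.
by apply: pairwise_uniq_in R_uniq _ => x x' xR x'R nx; apply: Tdisj.
Qed.
End TchS.

Lemma main_sec : exists C' : seq (seq (H * H)),
  [/\ oriented_cycle C', cycle_edges C' = cycle_edges C &
      @oriented_cycle (Tch P) (piP_cycle P C')].
Proof.
exists (map Wc R); split; [exact: OC' | exact: CE | ].
case: (pickP (fun _ : TH P => true)) => [d _ | H0]; first exact: (Tcyc d).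
have sn h : st_of P h = None by rewrite /st_of; case: pickP => // s; have := H0 s.
have pn W : Defs.piP P W = [::].
  rewrite /Defs.piP; suff -> : pi_pairs P W = [::] by [].
  by rewrite /pi_pairs; elim: W => //= p W ->; rewrite !sn.
suff -> : piP_cycle P (map Wc R) = [::] by [].
by rewrite /piP_cycle (eq_filter (a2 := pred0)) ?filter_pred0 // => W; rewrite pn.
Qed.

End Main.

Theorem mainTheorem11 (F : graph) (P : seq (seq (gH F * gH F))) :
  wf_graph F -> four_regular F -> circuit_partition P ->
  forall C : seq (seq (gH F * gH F)), oriented_cycle C ->
  exists C' : seq (seq (gH F * gH F)),
    [/\ oriented_cycle C', cycle_edges C' = cycle_edges C &
        @oriented_cycle (Tch P) (piP_cycle P C')].
Proof. by move=> wf reg cp C occ; apply: (main_sec wf reg cp occ). Qed.
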